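(* Let $(X,d,\mathfrak{m},p)$ be a pointed metric measure space, and assume that for each $R>r>0$ there is $C(R,r)>0$ such that $\mathfrak{m}(B_x(R,X))\leq C(R,r)\cdot\mathfrak{m}(B_x(r,X))$ for every $x\in X$. Then for each $[a,b]\subset(0,\infty)$, any discrete group $\Gamma\leq\mathrm{Iso}(X)$ and any short basis $\beta\subset\Gamma$ with respect to $p$, there are at most $C(3b,a/2)$ elements of $\beta$ with norm $\|\cdot\|_p$ in $[a,b]$.
   Context: For $g\in\Gamma$, $\|g\|_p:=d(gp,p)$. A short basis of $\Gamma$ with respect to $p$ is a countable collection $\{\gamma_1,\gamma_2,\dots\}\subset\Gamma$ such that each $\gamma_{j+1}$ is an element of minimal norm in $\Gamma\setminus\langle\gamma_1,\dots,\gamma_j\rangle$. *)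

(* Defs.v *)
From HB Require Import structures.
From mathcomp Require Import all_boot all_order all_algebra.
From mathcomp Require Import all_classical all_reals all_analysis.
Set Implicit Arguments. Unset Strict Implicit. Unset Printing Implicit Defensive.
Import Order.TTheory GRing.Theory Num.Theory.
Local Open Scope classical_set_scope.
Local Open Scope ring_scope.

Section Defs.
Variables (R : realType) (X : Type) (dist : X -> X -> R).

Definition is_metric : Prop :=
  [/\ (forall x y, 0 <= dist x y),
      (forall x y, dist x y = 0 <-> x = y),
      (forall x y, dist x y = dist y x) &
      (forall x y z, dist x z <= dist x y + dist y z)].

Definition cauchy_seq (u : nat -> X) : Prop :=
  forall e : R, 0 < e -> exists N, forall m n, (N <= m)%N -> (N <= n)%N ->
    dist (u m) (u n) < e.

Definition converges_to (u : nat -> X) (l : X) : Prop :=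
  forall e : R, 0 < e -> exists N, forall n, (N <= n)%N -> dist (u n) l < e.

Definition complete_metric : Prop :=
  forall u, cauchy_seq u -> exists l, converges_to u l.

Definition separable_metric : Prop :=
  exists u : nat -> X, forall x (e : R), 0 < e -> exists n, dist x (u n) < e.

Definition oball (x : X) (r : R) : set X := [set y | dist x y < r].

Definition isometry (f : X -> X) : Prop :=
  (forall x y, dist (f x) (f y) = dist x y) /\ (forall y, exists x, f x = y).

Definition is_subgroup (H : set (X -> X)) : Prop :=
  [/\ H `<=` isometry,
      H id,
      (forall g h, H g -> H h -> H (g \o h)) &
      (forall g, H g -> exists h, [/\ H h, g \o h = id & h \o g = id])].

Definition gen_subgroup (S : set (X -> X)) : set (X -> X) :=
  [set g | forall H, is_subgroup H -> S `<=` H -> H g].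

(* Gamma is discrete in Iso(X) (compact-open topology = topology of
   pointwise convergence on isometries): the identity is isolated. *)
Definition discrete_subgroup (G : set (X -> X)) : Prop :=
  exists (n : nat) (K : nat -> X) (e : R), 0 < e /\
    forall g, G g -> (forall i, (i < n)%N -> dist (g (K i)) (K i) < e) ->
      g = id.

Definition iso_norm (p : X) (g : X -> X) : R := dist (g p) p.

(* index range of a countable (finite of length n, or infinite) family *)
Definition in_range (len : option nat) (j : nat) : Prop :=
  if len is Some n then (j < n)%N else True.

Definition first_gens (gam : nat -> X -> X) (j : nat) : set (X -> X) :=
  [set g | exists2 i, (i < j)%N & g = gam i].

Definition short_basis (G : set (X -> X)) (p : X)
    (gam : nat -> X -> X) (len : option nat) : Prop :=
  (forall j, in_range len j ->
     [/\ G (gam j),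
         ~ gen_subgroup (first_gens gam j) (gam j) &
         forall g, G g -> ~ gen_subgroup (first_gens gam j) g ->
           iso_norm p (gam j) <= iso_norm p g]) /\
  (forall n, len = Some n -> G `<=` gen_subgroup (first_gens gam n)).

End Defs.

(* Main.v *)
Require Import Defs.
From HB Require Import structures.
From mathcomp Require Import all_boot all_order all_algebra.
From mathcomp Require Import all_classical all_reals all_analysis.
From mathcomp Require Import lra.
Import Order.TTheory GRing.Theory Num.Theory.
Local Open Scope classical_set_scope.
Local Open Scope ring_scope.

Fixpoint Useq (T : Type) (B : nat -> set T) (s : seq nat) : set T :=
  if s is j :: s' then B j `|` @Useq T B s' else set0.

Arguments Useq {T} B s.
Lemma Useq_meas (R : realType) (dd : measure_display) (X : measurableType dd)
  (B : nat -> set X) : (forall j, measurable (B j)) -> forall s, measurable (Useq B s).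
Proof.
move=> HB; elim=> [|j s IH] /=; first exact: measurable0.
exact: measurableU.
Qed.

Lemma Useq_mem {T : Type} (B : nat -> set T) s y :
  Useq B s y -> exists2 j, j \in s & B j y.
Proof.
elim: s => [|j s IH] //= [Hy|Hy]; first by exists j; rewrite ?inE ?eqxx.
by case: (IH Hy) => i Hi Hiy; exists i => //; rewrite inE Hi orbT.
Qed.

Arguments Useq_mem {T B s y}.

Lemma sum_bound (R : realType) (dd : measure_display) (X : measurableType dd)
  (mu : {measure set X -> \bar R}) (B : nat -> set X) (m c : R) :
  (forall j, measurable (B j)) -> 0 <= c -> 0 <= m ->
  forall s, uniq s ->
  (forall j, j \in s -> (m%:E <= c%:E * mu (B j))%E) ->
  (forall i j, i \in s -> j \in s -> i != j -> B i `&` B j = set0) ->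
  (((size s)%:R * m)%:E <= c%:E * mu (Useq B s))%E.
Proof.
move=> HB c0 m0; elim=> [|j s IH] /=.
  by move=> _ _ _; rewrite mul0r measure0 mule0.
move=> /andP[js us] Hm Hd.
rewrite measureU //; last 2 first.
- exact: (Useq_meas R dd X B HB).
- apply/seteqP; split=> // y [Hy1 Hy2].
  case: (Useq_mem Hy2) => i Hi Hiy.
  have ji : j != i by apply: contraNneq js => ->.
  have := Hd j i; rewrite inE eqxx /= inE Hi orbT => /(_ isT isT ji).
  by move=> E; have : (B j `&` B i) y by []; rewrite E.
rewrite ge0_muleDr //.
rewrite -addn1 natrD mulrDl mul1r addrC EFinD.
apply: leeD; first by apply: Hm; rewrite inE eqxx.
apply: IH => //.
  by move=> i Hi; apply: Hm; rewrite inE Hi orbT.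
by move=> i k Hi Hk; apply: Hd; rewrite inE ?Hi ?Hk orbT.
Qed.

Theorem mainTheorem12 (R : realType) (dd : measure_display)
  (X : measurableType dd) (dist : X -> X -> R)
  (mu : {measure set X -> \bar R}) (p : X)
  (Hmetric : is_metric dist)
  (Hcomplete : complete_metric dist)
  (Hsep : separable_metric dist)
  (Hballs_meas : forall x r, measurable (oball dist x r))
  (Hfinite : forall x r, 0 < r -> (mu (oball dist x r) < +oo)%E)
  (Hsupp : forall x r, 0 < r -> (0 < mu (oball dist x r))%E)
  (C : R -> R -> R)
  (HCpos : forall Rr r, 0 < r -> r < Rr -> 0 < C Rr r)
  (HC : forall Rr r, 0 < r -> r < Rr -> forall x,
      (mu (oball dist x Rr) <= (C Rr r)%:E * mu (oball dist x r))%E)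
  (a b : R) (Ha : 0 < a) (Hab : a <= b)
  (G : set (X -> X)) (HG : is_subgroup dist G)
  (Hdisc : discrete_subgroup dist G)
  (gam : nat -> X -> X) (len : option nat)
  (Hbasis : short_basis dist G p gam len)
  (s : seq nat) (Hs_uniq : uniq s)
  (Hs : forall j, j \in s ->
     in_range len j /\ a <= iso_norm dist p (gam j) <= b) :
  (size s)%:R <= C (3 * b) (a / 2).
Proof.
case: Hmetric => d0 deq dsym dtri.
case: HG => Hiso Hid Hcomp Hinv.
case: Hbasis => Hb1 _.
have Hb : 0 < b by apply: lt_le_trans Hab.
have a2 : 0 < a / 2 by rewrite divr_gt0.
have a2b : a / 2 < b by apply: lt_le_trans Hab; rewrite ltr_pdivrMr // ltr_pMr // ltr1n.
have sep : forall i j, (i < j)%N -> in_range len j ->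
    iso_norm dist p (gam j) <= dist (gam i p) (gam j p).
  move=> i j ij rj.
  have ri : in_range len i by move: rj; rewrite /in_range; case: (len) => //= n; apply: ltn_trans.
  case: (Hb1 i ri) => Gi _ _.
  case: (Hb1 j rj) => Gj ngj minj.
  case: (Hinv _ Gi) => h [Gh ih hi].
  have Gg : G (h \o gam j) by apply: Hcomp.
  have ng : ~ gen_subgroup dist (first_gens gam j) (h \o gam j).
    move=> gg; apply: ngj => H sH sub.
    have -> : gam j = gam i \o (h \o gam j).
      by apply/funext => x /=; have := congr1 (fun f => f (gam j x)) ih => /= ->.
    case: (sH) => _ _ Hc _; apply: Hc; last exact: gg H sH sub.
    by apply: sub; exists i.
  apply: (le_trans (minj _ Gg ng)).
  rewrite /iso_norm /= dsym.
  have := (Hiso _ Gi).1 (h (gam j p)) p.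
  have -> : gam i (h (gam j p)) = gam j p.
    by have := congr1 (fun f => f (gam j p)) ih.
  by move=> E; rewrite (dsym (gam i p)) E dsym.
have sep2 : forall i j, i \in s -> j \in s -> i != j ->
    a <= dist (gam i p) (gam j p).
  move=> i j Hi Hj ij.
  case: (ltngtP i j) => [lt|lt|eq]; last by rewrite eq eqxx in ij.
  - case: (Hs j Hj) => rj /andP[aj _]; exact: le_trans aj (sep _ _ lt rj).
  - case: (Hs i Hi) => ri /andP[ai _]; rewrite dsym; exact: le_trans ai (sep _ _ lt ri).
pose B j := oball dist (gam j p) (a / 2).
have rbp : 0 < b + a / 2 by rewrite addr_gt0.
have [m Mm] : exists m, mu (oball dist p (b + a / 2)) = m%:E.
  move: (Hfinite p _ rbp) (Hsupp p _ rbp).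
  by case: (mu _) => [r| |] //; exists r.
have m0 : 0 < m by rewrite -lte_fin -Mm; apply: Hsupp.
have c0 : 0 < C (3 * b) (a / 2).
  apply: HCpos => //; apply: lt_trans a2b _.
  by rewrite ltr_pMl // ltr1n.
have key : forall j, j \in s -> (m%:E <= (C (3 * b) (a / 2))%:E * mu (B j))%E.
  move=> j Hj.
  case: (Hs j Hj) => _ /andP[_ jb].
  apply: le_trans (HC _ _ a2 _ (gam j p)); last first.
    by apply: lt_trans a2b _; rewrite ltr_pMl // ltr1n.
  rewrite -Mm; apply: le_measure; rewrite ?inE //.
  move=> y; rewrite /oball /= => py.
  apply: le_lt_trans (dtri _ p _) _.
  apply: lt_le_trans (ler_ltD jb py) _.
  by lra.
have := @sum_bound R dd X mu B _ _ (fun j => Hballs_meas _ _) (ltW c0) (ltW m0) s Hs_uniq key.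
move=> H1.
have disj : forall i j, i \in s -> j \in s -> i != j -> B i `&` B j = set0.
  move=> i j Hi Hj ij; apply/seteqP; split=> // y [yi yj].
  have := sep2 _ _ Hi Hj ij.
  have : dist (gam i p) (gam j p) < a.
    apply: le_lt_trans (dtri _ y _) _.
    rewrite (dsym y); apply: lt_le_trans (ltrD yi yj) _.
    by rewrite -splitr.
  by move=> lt le; have := lt_le_trans lt le; rewrite ltxx.
have H2 := H1 disj.
have H3 : (mu (Useq B s) <= m%:E)%E.
  rewrite -Mm; apply: le_measure; rewrite ?inE //.
    exact: (Useq_meas R dd X B (fun j => Hballs_meas _ _)).
  move=> y /Useq_mem [j Hj Hy].
  case: (Hs j Hj) => _ /andP[_ jb].
  rewrite /oball /=; apply: le_lt_trans (dtri _ (gam j p) _) _.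
  by rewrite dsym; apply: ler_ltD jb Hy.
have H4 := le_trans H2 (lee_wpmul2l (ltW (c0 : (0 < (C (3 * b) (a / 2))%:E)%E)) H3).
rewrite -EFinM lee_fin in H4.
by rewrite -(ler_pM2r m0).
Qed.
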